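(* There is an absolute constant $c>0$ such that for every integer $k\geq 2$, the largest number $N(k)$ of vertices of a connected integral circulant graph $G(n;S)$ of degree $k$ satisfies $$N(k)\leq \exp\left(c\sqrt{k\log\log(k+2)}\,\log k\right).$$
   Context: For an integer $n$ and a set $S\subseteq\{1,\dots,n-1\}$ such that $s\in S$ if and only if $n-s\in S$, the circulant graph $G(n;S)$ is the undirected graph on vertex set $\mathbb{Z}_n$ in which $i$ and $j$ are adjacent iff $i-j \bmod n\in S$; its degree is $\#S$. A graph is integral if all eigenvalues of its adjacency matrix are integers. *)

(* Defs.v *)
From mathcomp Require Import all_boot all_order all_algebra all_field.
From Stdlib Require Import Reals.
Set Implicit Arguments. Unset Strict Implicit. Unset Printing Implicit Defensive.
Import GRing.Theory Num.Theory.

(* residue of i - j modulo n, for i j : 'I_n *)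
Definition zdiff (n : nat) (i j : 'I_n) : nat := (i + (n - j)) %% n.

Definition conn_set (n : nat) (S : {set 'I_n}) : Prop :=
  (forall s : 'I_n, s \in S -> 0 < s) /\
  (forall s : 'I_n, (s \in S) = [exists t in S, val t == (n - s) %% n]).

Definition circ_adj (n : nat) (S : {set 'I_n}) : rel 'I_n :=
  fun i j => [exists s in S, val s == zdiff i j].

Definition circ_adjmx (n : nat) (S : {set 'I_n}) : 'M[algC]_n :=
  \matrix_(i, j) (if circ_adj S i j then (@GRing.one algC) else (@GRing.zero algC)).

Definition integral_graph (n : nat) (A : 'M[algC]_n) : Prop :=
  forall a : algC, eigenvalue A a -> a \in Num.int.

Definition connected_graph (T : finType) (e : rel T) : Prop :=
  forall x y : T, connect e x y.

Definition circ_bound (c : R) (k : nat) : R :=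
  exp (c * sqrt (INR k * ln (ln (INR k + 2))) * ln (INR k))%R.

(* Main.v *)
Require Import Defs.
From mathcomp Require Import all_boot all_order all_algebra all_field.
From Stdlib Require Import Reals.
From Stdlib Require Import Lra Lia Psatz.
From mathcomp Require Import zify.

Lemma powE a b : Nat.pow a b = expn a b.
Proof. by elim: b => [|b IH] //=; rewrite expnS IH multE. Qed.

Section RealPart.
Local Open Scope R_scope.


Lemma ln_ge1 y : 0 < y -> 1 - / y <= ln y.
Proof.
move=> y0; have := exp_ineq1_le (ln (/ y)).
rewrite exp_ln; [|apply: Rinv_0_lt_compat; lra].
rewrite ln_Rinv //; lra.
Qed.

Lemma ln_le' x y : 0 < x -> x <= y -> ln x <= ln y.
Proof.
move=> x0 [h|->]; [apply: Rlt_le; apply: ln_increasing => // | lra].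
Qed.

Lemma exp_le' x y : x <= y -> exp x <= exp y.
Proof. move=> [h|->]; [apply: Rlt_le; apply: exp_increasing => // | lra]. Qed.

Lemma ln4 : 5/4 <= ln 4.
Proof.
have h3 : 1 <= ln 3.
  rewrite -{1}(ln_exp 1); apply: ln_le'; [apply: exp_pos| exact: exp_le_3].
have e : 4 = 3 * (4/3) by field.
rewrite e ln_mult; try lra.
have := ln_ge1 (4/3); lra.
Qed.

Lemma L_ge (k : nat) : (2 <= k)%nat -> 1/5 <= ln (ln (INR k + 2)).
Proof.
move=> hk.
have hk' : 2 <= INR k by apply: (le_INR 2 k); lia.
have h : 5/4 <= ln (INR k + 2).
  apply: Rle_trans ln4 _; apply: ln_le'; lra.
have := ln_ge1 (ln (INR k + 2)).
have : / ln (INR k + 2) <= / (5/4) by apply: Rinv_le_contravar; lra.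
move=> h1 h2; have := h2 ltac:(lra); lra.
Qed.

Lemma real_part (k w n : nat) : (2 <= k)%nat -> (w * w <= 4 * k)%nat ->
  (n <= expn k (3 * w))%nat -> INR n <= circ_bound 30 k.
Proof.
move=> hk hw hn.
have hk' : 2 <= INR k by apply: (le_INR 2 k); lia.
have L := L_ge k hk.
set LL := ln (ln (INR k + 2)) in L *.
apply: Rle_trans (le_INR _ _ (elimT leP hn)) _.
rewrite -powE pow_INR -(exp_ln (INR k ^ (3 * w))); last by apply: pow_lt; lra.
rewrite ln_pow; last lra.
rewrite /circ_bound; apply: exp_le'.
have lk : 0 <= ln (INR k).
  rewrite -ln_1; apply: ln_le'; lra.
apply: Rmult_le_compat_r => //.
rewrite -multE mult_INR.
have hw' : INR w * INR w <= 4 * INR k.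
  rewrite -mult_INR (_ : 4 = INR 4); last by simpl; lra.
  rewrite -mult_INR; apply: le_INR; rewrite !multE; lia.
have X0 : 0 <= INR k * LL by nra.
have := sqrt_sqrt _ X0; have := sqrt_pos (INR k * LL).
set X := sqrt _ => h1 h2.
have w0 := pos_INR w.
rewrite (_ : INR 3 = 3); last by simpl; lra.
nra.
Qed.

End RealPart.
From mathcomp Require Import ssrnat.
Set Implicit Arguments. Unset Strict Implicit. Unset Printing Implicit Defensive.


Lemma inv_mod a n : coprime a n -> exists b, b * a = 1 %[mod n].
Proof.
have [->|a0] := posnP a.
  rewrite /coprime gcd0n => /eqP ->; exists 0; by rewrite !modn1.
case: (egcdnP n a0) => km kn E _ co.
exists km; rewrite E (eqP co) -modnDml modnMl.
by [].
Qed.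

Lemma sum_prod_le (s : seq nat) : all (fun x => 0 < x) s ->
  \sum_(x <- s) (x - 1) + 1 <= \prod_(x <- s) x.
Proof.
elim: s => [|x s IH] /=; first by rewrite !big_nil.
case/andP=> x0 /IH H; rewrite !big_cons.
have: 0 < \prod_(x <- s) x by lia.
nia.
Qed.

Lemma sorted_sum (s : seq nat) m : sorted ltn s -> all (leq m) s ->
  size s * (size s - 1) + 2 * m * size s <= 2 * \sum_(x <- s) x.
Proof.
elim: s m => [|x s IH] m; first by move=> *; rewrite big_nil /=; lia.
rewrite /=.
move=> ps /andP[mx ms]; rewrite big_cons.
have As : all (leq m.+1) s.
  have := order_path_min (@ltn_trans) ps.
  move/allP=> H; apply/allP=> y /H; exact: leq_ltn_trans mx.
have := IH m.+1 (path_sorted ps) As.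
nia.
Qed.


Section NT.
Variables (m : nat) (S : {set 'I_m.+1}).
Local Notation N := m.+1.
Hypothesis Spos : forall s : 'I_N, s \in S -> 0 < s.
Hypothesis cl : forall a (t : 'I_N), coprime a N -> t \in S -> inZp (a * t) \in S.

Definition C (d : nat) := [set t in S | gcdn t N == d].

Lemma totient_card q : 0 < q -> totient q = #|[set u : 'I_q | coprime q u]|.
Proof.
move=> q0; rewrite totient_count_coprime big_mkord -sum1_card.
rewrite [RHS]big_mkcond /=; apply: eq_bigr => i _; rewrite inE; by case: coprime.
Qed.

Lemma classA (s : 'I_N) : s \in S ->
  totient (N`_[pred p | ~~ (p %| gcdn s N)]) <= #|C (gcdn s N)|.
Proof.
move=> sS.
set d := gcdn s N; set pi := [pred p | ~~ (p %| d)].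
set q := N`_pi; set q' := N`_pi^'.
have q0 : 0 < q := part_gt0 pi N.
have d0 : 0 < d by rewrite /d gcdn_gt0 orbT.
have Nqq : q * q' = N by rewrite /q /q' partnC.
have coqq : coprime q q' by exact: coprime_partC.
have cod : coprime q d.
  apply: (pnat_coprime (part_pnat pi N)).
  apply/pnatP => // p pp pd; rewrite !inE /= pd.
  by [].
have cos : coprime s q.
  rewrite coprime_sym /coprime -dvdn1; rewrite /coprime in cod.
  rewrite -(eqP cod) dvdn_gcd dvdn_gcdl /d dvdn_gcd dvdn_gcdr /=.
  exact: dvdn_trans (dvdn_gcdl _ _) (dvdn_part _ _).
pose f (t : 'I_N) : 'I_q := Ordinal (ltn_pmod t q0).
rewrite totient_card //.
apply: leq_trans (leq_imset_card f _).
apply: subset_leq_card; apply/subsetP => u; rewrite inE => cu.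
have [b Hb] := inv_mod cos.
set a := chinese q q' (b * u) 1.
have coa : coprime a N.
  rewrite -Nqq coprimeMr; apply/andP; split.
    rewrite -coprime_modl /a chinese_modl // coprime_modl coprimeMl.
    rewrite coprime_sym in cu; rewrite cu andbT.
    have : coprime (b * s) q by rewrite -coprime_modl Hb coprime_modl coprime1n.
    by rewrite coprimeMl => /andP[].
  by rewrite -coprime_modl /a chinese_modr // coprime_modl coprime1n.
apply/imsetP; exists (inZp (a * s)).
  rewrite inE cl // andTb /=.
  by rewrite gcdn_modl gcdnC Gauss_gcdr 1?coprime_sym // gcdnC.
apply: val_inj => /=.
have qN : q %| N by rewrite /q dvdn_part.
rewrite modn_dvdm // -modnMml /a chinese_modl // modnMml -mulnA.
rewrite (mulnC u) mulnA -modnMml Hb modnMml mul1n modn_small //.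
Qed.
End NT.


Lemma sum_const_seq (T : Type) (r : seq T) c : \sum_(x <- r) c = c * size r.
Proof. elim: r => [|x r IH]; rewrite ?big_nil ?big_cons ?IH /=; lia. Qed.

Lemma prod_const_seq (T : Type) (r : seq T) c : \prod_(x <- r) c = c ^ size r.
Proof. elim: r => [|x r IH]; rewrite ?big_nil ?big_cons ?IH ?expnS //. Qed.

Lemma sum_prod_leF (T : eqType) (r : seq T) (F : T -> nat) :
  (forall x, x \in r -> 0 < F x) -> \sum_(x <- r) (F x - 1) + 1 <= \prod_(x <- r) F x.
Proof.
elim: r => [|x r IH] Fp; first by rewrite !big_nil.
rewrite !big_cons.
have := Fp x (mem_head _ _).
have : \sum_(x <- r) (F x - 1) + 1 <= \prod_(x <- r) F x.
  by apply: IH => y yr; apply: Fp; rewrite in_cons yr orbT.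
nia.
Qed.

Section NT2.
Variables (m : nat) (S : {set 'I_m.+1}).
Local Notation N := m.+1.
Hypothesis Spos : forall s : 'I_N, s \in S -> 0 < s.
Hypothesis cl : forall a (t : 'I_N), coprime a N -> t \in S -> inZp (a * t) \in S.
Hypothesis cover : forall p, p \in primes N -> exists2 s, s \in S & ~~ (p %| s).

Definition xp p := p.-1 * p ^ (logn p N).-1.

Lemma xp_gt0 p : p \in primes N -> 0 < xp p.
Proof.
rewrite mem_primes => /and3P[pp _ _].
rewrite /xp muln_gt0 expn_gt0 (prime_gt0 pp) /=; have := prime_gt1 pp; lia.
Qed.

Lemma totq d : totient (N`_[pred p | ~~ (p %| d)]) =
  \prod_(p <- primes N | ~~ (p %| d)) xp p.
Proof.
set pi := [pred p | ~~ (p %| d)].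
rewrite totientE ?part_gt0 // primes_part big_filter big_seq_cond [RHS]big_seq_cond.
apply: eq_big => p //; move/andP=> [pP pd].
have pp : prime p by move: pP; rewrite mem_primes => /andP[].
congr (_ * _ ^ _.-1).
have -> : logn p N = logn p (N`_pi^' * N`_pi) by rewrite mulnC partnC.
rewrite logn_Gauss //.
apply: (pnat_coprime (pi := pi)); first by rewrite pnatE.
exact: part_pnat.
Qed.

Lemma cardS_split : #|S| = \sum_(d < N.+1) #|C S d|.
Proof.
rewrite -sum1_card (partition_big (fun t : 'I_N => (inord (gcdn t N) : 'I_N.+1)) predT) //=.
apply: eq_bigr => d _; rewrite -sum1_card; apply: eq_bigl => t; rewrite !inE.
case: (t \in S) => //=.
rewrite -(inj_eq val_inj) /= inordK // ltnS.
by apply: dvdn_leq => //; apply: dvdn_gcdr.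
Qed.

Lemma step2 (d : 'I_N.+1) :
  \sum_(p <- primes N) (if (C S d != set0) && ~~ (p %| d) then xp p - 1 else 0)
  <= #|C S d|.
Proof.
have [->|[s sC]] := set_0Vmem (C S d).
  rewrite big1 // => p _. rewrite eqxx. by [].
have : C S d != set0 by apply/set0Pn; exists s.
move=> ->; move: sC; rewrite inE => /andP[sS /eqP sd].
rewrite -big_mkcond /= -big_filter.
rewrite -sd.
have H : \sum_(i <- [seq i <- primes N | ~~ (i %| gcdn s N)]) (xp i - 1) + 1
    <= \prod_(i <- [seq i <- primes N | ~~ (i %| gcdn s N)]) xp i.
  apply: sum_prod_leF => x.
  by rewrite mem_filter => /andP[_]; apply: xp_gt0.
have T : \prod_(i <- [seq i <- primes N | ~~ (i %| gcdn s N)]) xp i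
    = totient (N`_[pred p | ~~ (p %| gcdn s N)]).
  by rewrite totq big_filter.
rewrite T in H.
apply: leq_trans (leq_trans (leq_addr 1 _) H) (classA cl sS).
Qed.

Lemma sumy : \sum_(p <- primes N) (xp p - 1) <= #|S|.
Proof.
rewrite cardS_split.
have HH : \sum_(d < N.+1) \sum_(p <- primes N)
    (if (C S d != set0) && ~~ (p %| d) then xp p - 1 else 0)
    <= \sum_(d < N.+1) #|C S d|.
  by apply: leq_sum => d _; exact: step2.
apply: leq_trans HH.
rewrite exchange_big /=.
rewrite big_seq [X in _ <= X]big_seq; apply: leq_sum => p pP.
have [s sS nps] := cover pP.
have gle : gcdn s N < N.+1 by rewrite ltnS; apply: dvdn_leq => //; apply: dvdn_gcdr.
pose d0 : 'I_N.+1 := inord (gcdn s N).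
rewrite (bigD1 d0) //=.
have -> : (C S d0 != set0) && ~~ (p %| d0) = true.
  rewrite /d0 inordK //; apply/andP; split.
    by apply/set0Pn; exists s; rewrite inE sS /=.
  by apply: contra nps => h; exact: dvdn_trans h (dvdn_gcdl _ _).
exact: leq_addr.
Qed.

Lemma nat_bound : 0 < #|S| ->
  size (primes N) * size (primes N) <= 4 * #|S| /\ N <= (2 * #|S| + 2) ^ size (primes N).
Proof.
move=> k0; have Y := sumy.
set k := #|S| in k0 Y *; set r := primes N in Y *.
split.
- have Hs := @sorted_sum r 2 (sorted_primes N).
  have H2 : all (leq 2) r.
    by apply/allP => p; rewrite mem_primes => /and3P[pp _ _]; exact: prime_gt1.
  have {}Hs := Hs H2.
  have H3 : \sum_(p <- r) p <= \sum_(p <- r) (xp p - 1) + 2 * size r.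
    rewrite -(sum_const_seq r 2) -big_split /=.
    rewrite big_seq [X in _ <= X]big_seq; apply: leq_sum => p pP.
    have e0 : 0 < p ^ (logn p N).-1 by rewrite expn_gt0; move: pP;
      rewrite mem_primes => /and3P[pp _ _]; rewrite prime_gt0.
    rewrite /xp; move: e0; set e := p ^ _; nia.
  move: Hs H3 Y k0.
  set w := size r; set A := \sum_(p <- r) p; set B := \sum_(p <- r) (xp p - 1).
  nia.
- rewrite {1}(prod_prime_decomp (ltn0Sn m)) prime_decompE big_map /=.
  rewrite -prod_const_seq big_seq [X in _ <= X]big_seq; apply: leq_prod => p pP.
  have := Y; rewrite (big_rem p pP) /= => Y'.
  have pp : prime p by move: pP; rewrite mem_primes => /and3P[].
  have a0 : 0 < logn p N by rewrite logn_gt0.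
  have p2 := prime_gt1 pp.
  have : p ^ logn p N <= 2 * xp p.
    rewrite /xp -{1}(prednK a0) expnS; set e := p ^ _; nia.
  move: Y'; set B := \sum_(y <- _) _; lia.
Qed.
End NT2.


Lemma cover_of_conn m (S : {set 'I_m.+1}) : connected_graph (circ_adj S) ->
  forall p, p \in primes m.+1 -> exists2 s, s \in S & ~~ (p %| s).
Proof.
move=> conn p pP.
have [pp _ pN] : [/\ prime p, 0 < m.+1 & p %| m.+1] by apply/and3P; rewrite -mem_primes.
case: (boolP [exists s in S, ~~ (p %| s)]) => [/exists_inP[s sS nps]|H].
  by exists s.
have allS : forall s, s \in S -> p %| s.
  move=> s sS; apply: negbNE; apply: contra H => h; apply/exists_inP; exists s => //.
have N2 : 1 < m.+1 := leq_trans (prime_gt1 pp) (dvdn_leq (ltn0Sn _) pN).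
pose a := [pred i : 'I_m.+1 | p %| i].
have cl : closed (circ_adj S) a.
  move=> x y /existsP [s /andP[sS /eqP e]].
  have ps := allS s sS; rewrite e /zdiff /dvdn modn_dvdm // -/(dvdn _ _) in ps.
  rewrite !inE /= (dvdn_add_eq ps) dvdn_subr //.
  exact: ltnW.
have := closed_connect cl (conn ord0 (Ordinal N2)).
rewrite !inE /= dvdn0 dvdn1 => /esym /eqP pe.
by move: (prime_gt1 pp); rewrite pe.
Qed.

Import GRing.Theory Num.Theory.

Section Lam.
Local Open Scope ring_scope.
Lemma zdiff_val m (i l : 'I_m.+1) : zdiff i l = val (i - l).
Proof. by rewrite /zdiff /= modnDmr. Qed.

Lemma circ_adjE m (S : {set 'I_m.+1}) i l : circ_adj S i l = ((i - l) \in S).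
Proof.
apply/existsP/idP => [[s /andP[sS /eqP e]]|H].
  by have -> : (i - l) = s by apply: val_inj; rewrite /= e zdiff_val.
by exists (i - l); rewrite H zdiff_val eqxx.
Qed.


Definition lam (N : nat) (S : {set 'I_N}) (w : algC) (j : nat) :=
  \sum_(s in S) w ^+ (s * j).

Lemma eig m (S : {set 'I_m.+1}) w (prim : m.+1.-primitive_root w) j :
  eigenvalue (circ_adjmx S) (lam S w j).
Proof.
apply/eigenvalueP; exists (\row_(i < m.+1) w ^+ (i * j)).
  apply/rowP => l; rewrite !mxE.
  under eq_bigr => i _ do rewrite !mxE circ_adjE.
  rewrite (reindex_inj (addIr l)) /= /lam mulr_suml [RHS]big_mkcond /=.
  apply: eq_bigr => s _; rewrite addrK.
  case: (s \in S); last by rewrite mulr0.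
  rewrite mulr1 -(prim_expr_mod prim) modnMml (prim_expr_mod prim) mulnDl exprD.
  by [].
apply/eqP => /rowP /(_ ord0); rewrite !mxE mul0n expr0 => /eqP.
by rewrite oner_eq0.
Qed.

End Lam.

Section Spec.
Local Open Scope ring_scope.
Variables (m : nat) (S : {set 'I_m.+1}) (w : algC).
Hypothesis prim : m.+1.-primitive_root w.
Hypothesis Hint : forall j, lam S w j \in Num.int.
Local Notation N := m.+1.

Lemma lam_mod j : lam S w (j %% N) = lam S w j.
Proof.
apply: eq_bigr => s _.
by rewrite -(prim_expr_mod prim) modnMmr (prim_expr_mod prim).
Qed.

Lemma lam_aut a j : coprime a N -> lam S w (a * j) = lam S w j.
Proof.
move=> co; have [u Hu] := Qn_aut_exists co.
have wN : w ^+ N = 1 by apply: prim_expr_order.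
have /intrP [z Hz] := Hint j.
have : u (lam S w j) = lam S w j by rewrite Hz rmorph_int.
rewrite rmorph_sum /= => <-; apply: eq_bigr => s _.
by rewrite rmorphXn /= Hu // -exprM mulnCA.
Qed.

Definition G (t : nat) := \sum_(j < N) lam S w j * w ^+ ((N - t) * j).

Lemma G_val (t : 'I_N) : G t = (t \in S)%:R * N%:R.
Proof.
rewrite /G /lam.
under eq_bigr => j _ do rewrite mulr_suml.
rewrite exchange_big /=.
have E : forall s : 'I_N, \sum_(j < N) w ^+ (s * j) * w ^+ ((N - t) * j)
    = if s == t then N%:R else 0.
  move=> s.
  under eq_bigr => j _ do rewrite -exprD -mulnDl exprM.
  case: eqP => [->|ne].
    rewrite subnKC; last exact: ltnW.
    rewrite (prim_expr_order prim).
    under eq_bigr => j _ do rewrite expr1n.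
    by rewrite sumr_const card_ord.
  set z := w ^+ _.
  have zN : z ^+ N = 1 by rewrite /z exprAC (prim_expr_order prim) expr1n.
  have z1 : z != 1.
    rewrite /z -(prim_order_dvd prim); apply/negP => /dvdnP [k Hk].
    have ht := ltn_ord t; have hs := ltn_ord s.
    have hst : (s : nat) <> t by move=> h; apply: ne; apply: val_inj.
    move: Hk; case: k => [|[|k]] /= Hk; lia.
  have := subrX1 z N; rewrite zN subrr => /esym /eqP.
  by rewrite mulf_eq0 subr_eq0 (negbTE z1) /= => /eqP.
under eq_bigr => s _ do rewrite E.
case: (boolP (t \in S)) => tS.
  rewrite (bigD1 t) //= eqxx big1 ?addr0 ?mul1r // => s /andP[_ /negbTE ->].
  by [].
rewrite big1 ?mul0r // => s sS; case: eqP => // st.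
by move: tS; rewrite -st sS.
Qed.

Lemma closure a (t : 'I_N) : coprime a N -> t \in S -> inZp (a * t) \in S.
Proof.
move=> co tS.
have [b Hb] := inv_mod co.
pose h (j : 'I_N) : 'I_N := inZp (a * j).
have hinj : injective h.
  move=> j1 j2 /(congr1 val) /= e; apply: val_inj => /=.
  have : ((b * (a * j1)) %% N = (b * (a * j2)) %% N)%N by rewrite -modnMmr e modnMmr.
  rewrite !mulnA -modnMml Hb modnMml -[X in _ = X]modnMml Hb modnMml !mul1n.
  by rewrite !modn_small.
have wt : forall x : nat, (x <= N)%N -> w ^+ (N - x) = (w ^+ x)^-1.
  move=> x hx.
  have w0 : w ^+ x != 0 by rewrite expf_eq0 (prim_root_eq0 prim) andbF.
  by rewrite -[LHS](mulfK w0) -exprD subnK // (prim_expr_order prim) mul1r.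
have GG : G (inZp (a * t) : 'I_N) = G t.
  rewrite /G; symmetry; rewrite (reindex_inj hinj) /=; symmetry; apply: eq_bigr => j _.
  rewrite lam_mod lam_aut //; congr (_ * _).
  rewrite !exprM !wt; last 2 first.
  - exact: ltnW.
  - by apply: ltnW; apply: ltn_pmod.
  rewrite -!exprVn -!exprM !exprVn; congr GRing.inv.
  apply/eqP; rewrite (eq_prim_root_expr prim) modnMml modnMmr.
  by rewrite mulnCA mulnA.
have := G_val (inZp (a * t) : 'I_N); rewrite GG G_val tS mul1r.
case: (inZp (a * t) \in S) => //; rewrite mul0r => /esym /eqP.
by rewrite eq_sym pnatr_eq0.
Qed.
End Spec.

From Stdlib Require Import Reals.

Theorem theorem2 :
  exists c : R, Rlt 0 c /\
    forall (k n : nat) (S : {set 'I_n}),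
      2 <= k -> conn_set S -> #|S| = k ->
      connected_graph (circ_adj S) ->
      integral_graph (circ_adjmx S) ->
      Rle (INR n) (circ_bound c k).
Proof.
exists 30%R; split; first by lra.
move=> k n S hk [Spos _] hS conn integ.
case: n S Spos hS conn integ => [|m] S Spos hS conn integ.
  have : #|S| <= #|'I_0| := max_card _.
  by rewrite card_ord hS; move: hk; case: (k) => [|[]].
have [w prim] := C_prim_root_exists (ltn0Sn m).
have Hint j : lam S w j \in Num.int := integ _ (eig S prim j).
have cl := closure prim Hint.
have cov := cover_of_conn conn.
have k0 : 0 < #|S| by rewrite hS; exact: leq_trans _ hk.
have [hw hN] := nat_bound cl cov k0.
rewrite hS in hw hN.
apply: (real_part k (size (primes m.+1))).
- exact: hk.
- exact: hw.
- apply: leq_trans hN _; rewrite expnM.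
  case: (size _) => [|x]; first by rewrite !expn0.
  rewrite leq_exp2r //.
  have : 2 <= k := hk.
  case: k {hk hw hS k0} => [|[|k]] // _.
  rewrite !expnS expn0; nia.
Qed.
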